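(* Consider a sequence of graphs $G=G_n$ on $n$ nodes with maximum degree $d_{\max}=\Omega(n^{\alpha})$ for some $\alpha>0$, and an SIS epidemic on $G$ with intrinsic infection rate $\beta=\Omega\left(n^{-\alpha(1-\epsilon)}\right)$ for some $\epsilon>0$ (cure rate $1$). Then for any initial infected set there exists an external infection policy with virulence $\mu=O(1)$ such that, for some $\lambda=\Theta(1)$, $\lambda>0$, $$\mathbb{E}[T_{SIS}]=\Omega(n^{\lambda}).$$
   Context: SIS epidemic with external agents on $G=(V,E)$, $|V|=n$: each node $j$ is in state $X_j(t)\in\{0,1\}$ (susceptible/infected). A susceptible node $j$ becomes infected at rate $\beta\sum_{i:(i,j)\in E}X_i(t)+L_j(t)$; an infected node becomes susceptible at rate $1$. The external infection vector $L(t)$ satisfies $L_j(t)\ge0$, $\|L(t)\|_1\le\mu$, may depend on the state and history, and is $\mathbf{0}$ whenever no node is infected. $T_{SIS}=\inf\{t:\mathbf{X}(t)=\mathbf{0}\}$. *)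

(* Defs.v *)
From HB Require Import structures.
From mathcomp Require Import all_boot all_order all_algebra.
From mathcomp Require Import all_classical all_reals all_analysis.
Set Implicit Arguments. Unset Strict Implicit. Unset Printing Implicit Defensive.
Import Order.TTheory GRing.Theory Num.Theory.
Local Open Scope ring_scope.

Section SIS.
Variables (R : realType) (n : nat).

Definition simple_graph (e : rel 'I_n) : Prop := symmetric e /\ irreflexive e.

Definition deg (e : rel 'I_n) (v : 'I_n) : nat := #|[set u | e v u]|.

Definition dmax (e : rel 'I_n) : nat := (\max_(v : 'I_n) deg e v)%N.

(* A (stationary, state-feedback) external infection policy with virulence mu:
   L S j is the external infection rate on node j when the infected set is S. *)
Definition is_policy (mu : R) (L : {set 'I_n} -> 'I_n -> R) : Prop :=
  (forall S j, 0 <= L S j) /\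
  (forall S, \sum_(j : 'I_n) L S j <= mu) /\
  (forall j, L (@finset.set0 _) j = 0).

Definition rate (e : rel 'I_n) (beta : R) (L : {set 'I_n} -> 'I_n -> R)
    (S T : {set 'I_n}) : R :=
  \sum_(j | j \notin S)
     (T == j |: S)%:R * (beta * (#|[set i in S | e i j]|)%:R + L S j)
  + \sum_(j in S) (T == S :\ j)%:R.

Definition outrate e beta L (S : {set 'I_n}) : R :=
  \sum_(T : {set 'I_n}) rate e beta L S T.

(* uniformization constant: bounds every total outflow rate *)
Definition unif e beta L : R := 1 + \sum_(S : {set 'I_n}) outrate e beta L S.

Definition trans e beta L (S T : {set 'I_n}) : R :=
  rate e beta L S T / unif e beta L
  + (S == T)%:R * (1 - outrate e beta L S / unif e beta L).

Fixpoint dist e beta L (A : {set 'I_n}) (k : nat) : {set 'I_n} -> R :=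
  match k with
  | 0 => fun S => (S == A)%:R
  | k'.+1 => fun T => \sum_(S : {set 'I_n}) dist e beta L A k' S * trans e beta L S T
  end.

(* E[T_SIS] from initial infected set A:
   E[T] = int_0^oo P(X_t <> 0) dt = (1/Lam) sum_k P(Y_k <> 0)  (uniformization). *)
Definition ET e beta L (A : {set 'I_n}) : \bar R :=
  (\sum_(0 <= k <oo)
     ((\sum_(S : {set 'I_n} | S != @finset.set0 _) dist e beta L A k S) / unif e beta L)%:E)%E.

End SIS.

(* Main.v *)
Require Import Defs.
From HB Require Import structures.
From mathcomp Require Import all_boot all_order all_algebra.
From mathcomp Require Import all_classical all_reals all_analysis.
From mathcomp Require Import ring lra zify.
Import Order.TTheory GRing.Theory Num.Theory.
Local Open Scope ring_scope.
Set Implicit Arguments. Unset Strict Implicit.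

Section Frame.
Variables (R : realType) (n : nat) (e : rel 'I_n) (beta : R)
  (L : {set 'I_n} -> 'I_n -> R).
Hypothesis beta0 : 0 <= beta.
Hypothesis L0 : forall S j, 0 <= L S j.
Hypothesis Lset0 : forall j, L finset.set0 j = 0.

Local Notation rate := (rate e beta L).
Local Notation outrate := (outrate e beta L).
Local Notation Lam := (unif e beta L).
Local Notation P := (trans e beta L).

Definition rj (S : {set 'I_n}) j := beta * (#|[set i in S | e i j]|)%:R + L S j.

Lemma rj_ge0 S j : 0 <= rj S j.
Proof. by rewrite /rj addr_ge0 ?mulr_ge0. Qed.

Lemma rate_ge0 S T : 0 <= rate S T.
Proof.
rewrite /Defs.rate addr_ge0 //; apply: sumr_ge0 => j _ //.
by apply: mulr_ge0 => //; exact: rj_ge0.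
Qed.

Lemma outrate_ge0 S : 0 <= outrate S.
Proof. by apply: sumr_ge0 => T _; apply: rate_ge0. Qed.

Lemma out_le_Lam S : outrate S <= Lam - 1.
Proof.
rewrite /unif addrC addKr.
rewrite (bigD1 S) //= lerDl; apply: sumr_ge0 => T _; exact: outrate_ge0.
Qed.

Lemma Lam_gt0 : 0 < Lam.
Proof.
have := out_le_Lam finset.set0; have := outrate_ge0 finset.set0. lra.
Qed.

Lemma trans_ge0 S T : 0 <= P S T.
Proof.
rewrite /trans; apply: addr_ge0.
  by apply: divr_ge0; [exact: rate_ge0| exact: ltW Lam_gt0].
apply: mulr_ge0 => //; rewrite subr_ge0 ler_pdivrMr ?Lam_gt0 // mul1r.
have := out_le_Lam S; lra.
Qed.

Lemma sum_rate (S : {set 'I_n}) (f : {set 'I_n} -> R) :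
  \sum_T rate S T * f T =
  \sum_(j | j \notin S) rj S j * f (j |: S) + \sum_(j in S) f (S :\ j).
Proof.
rewrite /Defs.rate.
under eq_bigr => T _ do rewrite mulrDl !mulr_suml.
rewrite big_split /=; congr (_ + _); rewrite exchange_big /=;
  apply: eq_bigr => j _.
  under eq_bigr => T _ do rewrite mulrAC.
  rewrite (bigD1 (j |: S)) //= eqxx mul1r big1 ?addr0; first by rewrite mulrC.
  by move=> T /negbTE ->; rewrite !mul0r.
rewrite (bigD1 (S :\ j)) //= eqxx mul1r big1 ?addr0 // => T /negbTE ->.
by rewrite mul0r.
Qed.

Lemma outrateE S : outrate S = \sum_T rate S T.
Proof. by []. Qed.

Lemma transE (S : {set 'I_n}) (f : {set 'I_n} -> R) :
  \sum_T P S T * f T = f S + (\sum_T rate S T * (f T - f S)) / Lam.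
Proof.
have LL := Lam_gt0.
have E1 : \sum_T P S T * f T =
   (\sum_T rate S T * f T) / Lam + (1 - outrate S / Lam) * f S.
  rewrite /trans; under eq_bigr do rewrite mulrDl.
  rewrite big_split /=; congr (_ + _).
    by rewrite mulr_suml; apply: eq_bigr => T _; rewrite mulrAC.
  rewrite (bigD1 S) //= eqxx mul1r big1 ?addr0 // => T.
  by rewrite eq_sym => /negbTE ->; rewrite !mul0r.
have E2 : \sum_T rate S T * (f T - f S) =
   \sum_T rate S T * f T - outrate S * f S.
  by rewrite outrateE mulr_suml -sumrB; apply: eq_bigr => T _; rewrite mulrBr.
rewrite E1 E2; field; exact: lt0r_neq0.
Qed.

Lemma rate0 T : rate finset.set0 T = 0.
Proof.
rewrite /Defs.rate big1 ?big_set0 ?addr0 // => j _.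
have -> : [set i in (finset.set0 : {set 'I_n}) | e i j] = finset.set0.
  by apply/setP => i; rewrite !inE.
by rewrite cards0 mulr0 add0r Lset0 mulr0.
Qed.

Variable A : {set 'I_n}.
Local Notation d := (dist e beta L A).

Lemma dist_ge0 k S : 0 <= d k S.
Proof.
elim: k S => [|k IH] S /=; first by case: (S == A).
by apply: sumr_ge0 => T _; rewrite mulr_ge0 ?IH ?trans_ge0.
Qed.

Definition nz (S : {set 'I_n}) : R := (S != finset.set0)%:R.

Definition pk k := \sum_S d k S * nz S.

Lemma dist_step k (f : {set 'I_n} -> R) :
  \sum_T d k.+1 T * f T = \sum_S d k S * (\sum_T P S T * f T).
Proof.
rewrite /=; under eq_bigr => T _ do rewrite mulr_suml.
rewrite exchange_big /=; apply: eq_bigr => S _; rewrite mulr_sumr.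
by apply: eq_bigr => T _; rewrite mulrA.
Qed.

Lemma pk_noninc k : pk k.+1 <= pk k.
Proof.
rewrite /pk dist_step; apply: ler_sum => S _.
apply: ler_wpM2l; first exact: dist_ge0.
rewrite transE.
have [->|SN] := eqVneq S finset.set0.
  by rewrite big1 ?mul0r ?addr0 // => T _; rewrite rate0 mul0r.
rewrite gerDl; apply: mulr_le0_ge0; last by rewrite invr_ge0 ltW ?Lam_gt0.
apply: sumr_le0 => T _; apply: mulr_ge0_le0; first exact: rate_ge0.
by rewrite /nz SN subr_le0; case: (T != _).
Qed.

Lemma pk_mono k K : (k <= K)%N -> pk K <= pk k.
Proof.
move=> /subnK <-; elim: (K - k)%N => [|i IH]; first by rewrite add0n.
by rewrite addSn; apply: le_trans (pk_noninc _) IH.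
Qed.

Variable g : {set 'I_n} -> R.
Hypothesis g0 : g finset.set0 = 0.
Hypothesis drift : forall S, S != finset.set0 ->
  -1 <= \sum_T rate S T * (g T - g S).

Definition mk k := \sum_S d k S * g S.

Lemma mk_step k : mk k - pk k / Lam <= mk k.+1.
Proof.
rewrite /mk dist_step /pk mulr_suml -sumrB; apply: ler_sum => S _.
rewrite -mulrA -mulrBr; apply: ler_wpM2l; first exact: dist_ge0.
rewrite transE lerD2l /nz.
have [->|SN] := eqVneq S finset.set0.
  by rewrite big1 ?mul0r ?oppr0 // => T _; rewrite rate0 mul0r.
rewrite mul1r -mulN1r; apply: ler_wpM2r; last exact: drift.
by rewrite invr_ge0 ltW ?Lam_gt0.
Qed.

Lemma mk_tele K : mk 0 - \sum_(k < K) pk k / Lam <= mk K.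
Proof.
elim: K => [|K IH]; first by rewrite big_ord0 subr0.
rewrite big_ord_recr /=; have := mk_step K; lra.
Qed.

Variable G : R.
Hypothesis gG : forall S, g S <= G.

Lemma mk_le K : mk K <= G * pk K.
Proof.
rewrite /mk /pk mulr_sumr; apply: ler_sum => S _.
rewrite /nz; have [->|SN] := eqVneq S finset.set0; first by rewrite g0 !mulr0.
by rewrite mulr1 mulrC ler_wpM2r ?dist_ge0.
Qed.


Lemma pkE k : pk k = \sum_(S | S != finset.set0) d k S.
Proof.
rewrite /pk [RHS]big_mkcond /=; apply: eq_bigr => S _.
by rewrite /nz; case: (S != _); rewrite ?mulr1 ?mulr0.
Qed.

Lemma ET_ge : ((g A / 2)%:E <= ET e beta L A)%E.
Proof.
have LL := Lam_gt0.
set K := (Num.truncn (G * Lam)).+1.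
have hK : G * Lam <= K%:R by apply: ltW; exact: Num.Theory.truncnS_gt.
have m0 : mk 0 = g A.
  rewrite /mk /= (bigD1 A) //= eqxx mul1r big1 ?addr0 // => S /negbTE ->.
  by rewrite mul0r.
have h1 := mk_tele K; have h2 := mk_le K; rewrite m0 in h1.
have h3 : K%:R * (pk K / Lam) <= \sum_(k < K) pk k / Lam.
  rewrite -[X in X <= _](_ : \sum_(k < K) pk K / Lam = _); last first.
    by rewrite sumr_const card_ord mulr_natl.
  apply: ler_sum => k _; apply: ler_wpM2r.
    by rewrite invr_ge0 ltW.
  by apply: pk_mono; apply: ltnW.
have h4 : G * pk K <= K%:R * (pk K / Lam).
  rewrite mulrA mulrAC; apply: ler_wpM2r.
    rewrite (_ : pk K = \sum_S d K S * nz S) //.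
    by apply: sumr_ge0 => S _; rewrite mulr_ge0 ?dist_ge0 // /nz ler0n.
  by rewrite ler_pdivlMr.
have h5 : g A / 2 <= \sum_(k < K) pk k / Lam by lra.
apply: le_trans (_ : ((\sum_(k < K) pk k / Lam)%:E <= _)%E).
  by rewrite lee_fin.
rewrite /ET.
apply: le_trans (nneseries_lim_ge K _); last first.
  move=> k _ _; rewrite lee_fin; apply: divr_ge0 (ltW LL).
  by rewrite -pkE /pk; apply: sumr_ge0 => S _; rewrite mulr_ge0 ?dist_ge0 // /nz ler0n.
rewrite sumEFin big_mkord lee_fin; apply: ler_sum => k _.
by rewrite pkE.
Qed.

End Frame.

Section Arith.
Variables (R : realType) (K : nat).

Definition Kr : R := K%:R.
Definition Gs (m : nat) : R := Kr / ((minn m K).+1)%:R.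
Definition as_ (m : nat) : R := if (m < K)%N then 1 / ((K.+1)%:R * (m.+1)%:R) else 0.
Definition As (m : nat) : R := Kr + \sum_(i < m) as_ i.
Definition Bs (m : nat) : R := As m - Gs m.

Lemma AsS m : As m.+1 = As m + as_ m.
Proof. by rewrite /As big_ord_recr /= addrA. Qed.

Lemma as_ge0 m : 0 <= as_ m.
Proof. by rewrite /as_; case: ifP => // _; rewrite divr_ge0 ?mulr_ge0. Qed.

Lemma Gs_ge0 m : 0 <= Gs m.
Proof. by rewrite /Gs divr_ge0. Qed.

Lemma Gs_le m : Gs m <= Kr.
Proof.
rewrite /Gs ler_pdivrMr ?ltr0Sn // ler_peMr ?ler0n //.
by rewrite ler1n.
Qed.

Lemma Gs_mono m : Gs m.+1 <= Gs m.
Proof.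
rewrite /Gs; apply: ler_wpM2l; first by rewrite ler0n.
rewrite lef_pV2 ?posrE ?ltr0Sn // ler_nat; lia.
Qed.

Lemma As_ge m : Kr <= As m.
Proof. by rewrite /As lerDl; apply: sumr_ge0 => i _; exact: as_ge0. Qed.

Lemma Bs_ge0 m : 0 <= Bs m.
Proof. have := As_ge m; have := Gs_le m; rewrite /Bs; lra. Qed.

Lemma Bs0 : Bs 0 = 0.
Proof. by rewrite /Bs /As big_ord0 addr0 /Gs min0n divr1 subrr. Qed.

Lemma BsS m : Bs m.+1 - Bs m = as_ m + Gs m - Gs m.+1.
Proof. rewrite /Bs AsS; ring. Qed.

Lemma Bs_mono m : Bs m <= Bs m.+1.
Proof. have := BsS m; have := as_ge0 m; have := Gs_mono m; lra. Qed.

Variables (d : nat) (beta : R).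
Hypothesis beta0 : 0 <= beta.
Hypothesis hKd : (2 * K <= d)%N.
Hypothesis hbd : 2 * ((K.+1)%:R ^+ 2) <= beta * d%:R.

Lemma x_gt0 : 0 < (K.+1)%:R :> R. Proof. by rewrite ltr0Sn. Qed.
Lemma KrE : Kr = (K.+1)%:R - 1. Proof. by rewrite /Kr -addn1 natrD addrK. Qed.

Lemma GsE m : (m <= K)%N -> Gs m = Kr / (m.+1)%:R.
Proof. by move=> mK; rewrite /Gs (minn_idPl mK). Qed.
Lemma GsE' m : (K <= m)%N -> Gs m = Kr / (K.+1)%:R.
Proof. by move=> mK; rewrite /Gs (minn_idPr mK). Qed.
Lemma asE m : (m < K)%N -> as_ m = 1 / ((K.+1)%:R * (m.+1)%:R).
Proof. by move=> mK; rewrite /as_ mK. Qed.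
Lemma asE' m : (K <= m)%N -> as_ m = 0.
Proof. by move=> mK; rewrite /as_ ltnNge mK. Qed.

Lemma aux1 (Kr' x y : R) : 0 < x -> Kr' = x - 1 -> 2 * x <= y ->
  -1 + Kr' / 4 <= - Kr' + y.
Proof. move=> *; lra. Qed.

Lemma aux2 (Kr' x w z D b : R) : 0 <= Kr' -> Kr' = x - 1 -> 0 < w -> z = w + 1 ->
  x * x <= D * b ->
  -1 <= - (Kr' / z) - w * (1 / (x * w)) + D * (b * (1 / (x * z))).
Proof.
move=> K0 KE wg zE h.
have xg : 0 < x by lra.
have zg : 0 < z by lra.
have e1 : w * (1 / (x * w)) = 1 / x.
  by field; apply/andP; split; apply: lt0r_neq0.
have e2 : D * (b * (1 / (x * z))) = (D * b) / (x * z).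
  by rewrite mul1r mulrA.
have h3 : x * x / (x * z) <= (D * b) / (x * z).
  by apply: ler_wpM2r => //; rewrite invr_ge0 ltW // mulr_gt0.
have e4 : x * x / (x * z) = x / z.
  by field; apply/andP; split; apply: lt0r_neq0.
have e5 : - (Kr' / z) + x / z = 1 / z.
  by rewrite KE; field; apply: lt0r_neq0.
have h6 : 0 < 1 / z by rewrite divr_gt0.
have h7 : 1 / x <= 1 by rewrite ler_pdivrMr // mul1r; lra.
rewrite e1 e2; lra.
Qed.

Lemma mainT m :
  -1 + Kr / 4 * (m == 0)%:R <=
  - Gs m - m%:R * as_ m.-1 + (d%:R - m%:R) * (beta * as_ m).
Proof.
have xg := x_gt0; have KE := KrE.
case: m => [|m].
  rewrite eqxx mulr1 mul0r subr0 /Gs min0n divr1 subr0.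
  case: (posnP K) => [K0|Kp].
    by rewrite /as_ K0 ltnn mulr0 mulr0 /Kr K0; lra.
  rewrite asE // mulr1.
  apply: (aux1 xg KE).
  rewrite mulrA mul1r ler_pdivlMr // -mulrA -expr2; have := hbd; lra.
rewrite /= mulr0 addr0.
have K0 : 0 <= Kr by rewrite /Kr ler0n.
have [mK|Km] := ltnP m.+1 K.
  rewrite (GsE (ltnW mK)) (asE mK) (asE (ltnW mK)).
  apply: (aux2 (w := (m.+1)%:R) K0 KE); first by rewrite ltr0Sn.
    by rewrite -[m.+2]addn1 natrD.
  have h1 : 2 * (m.+1)%:R <= d%:R :> R.
    by rewrite -natrM ler_nat; lia.
  have h2 : 0 <= d%:R / 2 - (m.+1)%:R :> R by lra.
  have := mulr_ge0 beta0 h2; have := hbd; rewrite expr2; lra.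
rewrite (GsE' Km) (asE' Km) !mulr0 addr0.
have x1 : Kr / (K.+1)%:R <= 1.
  by rewrite ler_pdivrMr // mul1r KE; lra.
have [mK2|Km2] := ltnP m K.
  have e : m.+1 = K by apply/eqP; rewrite eqn_leq mK2 Km.
  rewrite (asE mK2) e -/Kr.
  have Kp : 0 < Kr by rewrite /Kr ltr0n -e.
  have : Kr * (1 / ((K.+1)%:R * Kr)) = 1 / (K.+1)%:R.
    by field; apply/andP; split; apply: lt0r_neq0.
  move=> ->.
  have : Kr / (K.+1)%:R + 1 / (K.+1)%:R = 1.
    by rewrite KE; field; apply: lt0r_neq0.
  by move=> H; rewrite -opprD H.
by rewrite (asE' Km2) mulr0 subr0 lerN2.
Qed.


Lemma aux5 (Kr' x w z b : R) : 0 <= Kr' -> Kr' = x - 1 -> 0 < w -> z = w + 1 ->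
  0 <= b ->
  (b * w + 2) * (Kr' / z) - w * (1 / (x * w) + Kr' / w - Kr' / z)
   = b * w * (Kr' / z) + Kr' / z - 1 / x /\ 1 / x <= 1 /\ 0 <= Kr' / z
   /\ 0 <= b * w * (Kr' / z).
Proof.
move=> K0 KE wg zE b0.
have xg : 0 < x by lra.
have zg : 0 < z by lra.
split; first by rewrite zE; field; apply/and3P; split; apply: lt0r_neq0 => //; lra.
split; first by rewrite ler_pdivrMr // mul1r; lra.
split; first by rewrite divr_ge0 // ltW.
by rewrite mulr_ge0 ?divr_ge0 ?mulr_ge0 // ltW.
Qed.

Lemma aux6 (a : R) : 0 <= a -> -1 + a / 4 <= 2 * a.
Proof. move=> *; lra. Qed.
Lemma aux7 (a p r : R) : 0 <= a -> 0 <= p -> r <= 1 -> -1 + a / 4 <= p + a / 2 - r.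
Proof. move=> *; lra. Qed.
Lemma aux8 (p q r : R) : 0 <= q -> 0 <= p -> r <= 1 -> -1 <= p + q - r.
Proof. move=> *; lra. Qed.

Lemma mainF m :
  -1 + Kr / 4 * (m <= 1)%N%:R <=
  (beta * m%:R + 2) * Gs m - m%:R * (Bs m - Bs m.-1).
Proof.
have xg := x_gt0; have KE := KrE.
have K0 : 0 <= Kr by rewrite /Kr ler0n.
case: m => [|k].
  rewrite mul0r subr0 mulr0 add0r /Gs min0n divr1 mulr1.
  exact: aux6.
rewrite /= BsS.
have [kK|Kk] := ltnP k K.
  rewrite (GsE (ltnW kK)) (GsE kK) (asE kK).
  have wg : 0 < (k.+1)%:R :> R by rewrite ltr0Sn.
  have zE : (k.+2)%:R = (k.+1)%:R + 1 :> R by rewrite -[k.+2]addn1 natrD.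
  have [e1 [h1 [h2 h3]]] := aux5 K0 KE wg zE beta0.
  rewrite e1; move: h1 h2 h3; case: k {kK wg zE e1} => [|k] /= h1 h2 h3.
    by rewrite mulr1; apply: aux7.
  by rewrite mulr0 addr0; apply: aux8.
rewrite (asE' Kk) (GsE' Kk) (GsE' (leqW Kk)) add0r subrr mulr0 subr0.
have F0 : 0 <= (beta * (k.+1)%:R + 2) * (Kr / (K.+1)%:R).
  by rewrite mulr_ge0 ?divr_ge0 ?addr_ge0 ?mulr_ge0.
apply: le_trans F0; case: k Kk => [|k] Kk /=.
  have -> : Kr = 0 by rewrite /Kr; move: Kk; rewrite leqn0 => /eqP ->.
  by rewrite mul0r mul0r addr0 lerN10.
by rewrite mulr0 addr0 lerN10.
Qed.

End Arith.
Section Star.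
Variables (R : realType) (n : nat) (e : rel 'I_n) (beta : R) (h : 'I_n) (K : nat).
Hypothesis esym : symmetric e.
Hypothesis eirr : irreflexive e.
Hypothesis beta0 : 0 <= beta.
Implicit Types (S : {set 'I_n}) (j : 'I_n).

Definition Lh (S : {set 'I_n}) (j : 'I_n) : R :=
  if (j == h) && (h \notin S) && (S != finset.set0) then 2 else 0.

Lemma Lh_ge0 S j : 0 <= Lh S j.
Proof. by rewrite /Lh; case: ifP. Qed.

Lemma Lh_set0 j : Lh finset.set0 j = 0.
Proof. by rewrite /Lh eqxx !andbF. Qed.

Lemma Lh_policy : is_policy 2 Lh.
Proof.
split; first exact: Lh_ge0.
split; last exact: Lh_set0.
move=> S; rewrite (bigD1 h) //= big1 ?addr0.
  by rewrite /Lh eqxx; case: ifP.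
by move=> j /negbTE jh; rewrite /Lh jh.
Qed.

Definition mS (S : {set 'I_n}) := #|[set u in S | e h u]|.

Lemma mS_add j (S : {set 'I_n}) : j \notin S -> mS (j |: S) = (mS S + e h j)%N.
Proof.
move=> jS; rewrite /mS; case: (boolP (e h j)) => hj.
  have -> : [set u in j |: S | e h u] = j |: [set u in S | e h u].
    by apply/setP => u; rewrite !inE; case: (eqVneq u j) => [->|]; rewrite ?hj.
  by rewrite cardsU1 inE (negbTE jS) addnC.
have -> : [set u in j |: S | e h u] = [set u in S | e h u].
  apply/setP => u; rewrite !inE; case: (eqVneq u j) => [->|] //=.
  by rewrite (negbTE hj) !andbF.
by rewrite addn0.
Qed.

Lemma mS_del j (S : {set 'I_n}) : j \in S -> mS (S :\ j) = (mS S - e h j)%N.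
Proof.
move=> jS; rewrite /mS; case: (boolP (e h j)) => hj.
  have -> : [set u in S :\ j | e h u] = [set u in S | e h u] :\ j.
    by apply/setP => u; rewrite !inE andbA.
  rewrite (cardsD1 j [set u in S | e h u]) inE jS hj /=.
  by rewrite add1n subn1.
have -> : [set u in S :\ j | e h u] = [set u in S | e h u].
  apply/setP => u; rewrite !inE; case: (eqVneq u j) => [->|] //=.
  by rewrite (negbTE hj) !andbF.
by rewrite subn0.
Qed.

Definition Phi (S : {set 'I_n}) : R :=
  if h \in S then As R K (mS S) else Bs R K (mS S).

Definition gg (S : {set 'I_n}) : R := Phi S + Kr R K / 4 * nz R S.

Local Notation rj := (rj e beta Lh).

Lemma rj_h S : h \notin S -> S != finset.set0 ->
  rj S h = beta * (mS S)%:R + 2.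
Proof.
move=> hS S0; rewrite /rj /Lh eqxx hS S0 /mS; congr (beta * _%:R + _).
by apply: eq_card => u; rewrite !inE esym.
Qed.

Lemma rj_nb S j : h \in S -> e h j -> beta <= rj S j.
Proof.
move=> hS hj; rewrite /rj -[X in X <= _]addr0; apply: lerD; last exact: Lh_ge0.
rewrite -[X in X <= _]mulr1 ler_wpM2l // ler1n.
apply/card_gt0P. exists h. by rewrite inE hS hj.
Qed.


Lemma eqle (x y : R) : x = y -> x <= y. Proof. by move->. Qed.

Definition Ej S j : R :=
  (j == h)%:R * (if h \in S then - Gs R K (mS S)
                 else (beta * (mS S)%:R + 2) * Gs R K (mS S))
  + (e h j && (j \in S))%:R * (if h \in S then - as_ R K (mS S).-1
                               else - (Bs R K (mS S) - Bs R K (mS S).-1))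
  + (e h j && (j \notin S))%:R * (if h \in S then beta * as_ R K (mS S) else 0).

Definition Dj S j : R :=
  if j \in S then Phi (S :\ j) - Phi S else rj S j * (Phi (j |: S) - Phi S).

Lemma D_ge_E S j : S != finset.set0 -> Ej S j <= Dj S j.
Proof.
move=> S0; rewrite /Ej /Dj.
have ehh : e h h = false := eirr h.
case: (eqVneq j h) => [->|jh].
  rewrite ehh /= mul1r !mul0r !addr0.
  case: (boolP (h \in S)) => hS.
    rewrite /Phi setD11 hS mS_del // ehh subn0; apply: eqle; rewrite /Bs; ring.
  rewrite rj_h // /Phi setU11 (negbTE hS) mS_add // ehh addn0.
  by apply: eqle; rewrite /Bs; congr (_ * _); ring.
rewrite mul0r add0r.
have hjS : (h \in S :\ j) = (h \in S) by rewrite in_setD1 eq_sym jh.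
have hjS' : (h \in j |: S) = (h \in S) by rewrite in_setU1 eq_sym (negbTE jh).
case: (boolP (e h j)) => hj; last first.
  rewrite !andFb !mul0r addr0.
  case: (boolP (j \in S)) => jS.
    by rewrite /Phi hjS mS_del // (negbTE hj) subn0 subrr.
  by rewrite /Phi hjS' mS_add // (negbTE hj) addn0 subrr mulr0.
rewrite !andTb.
case: (boolP (j \in S)) => jS /=.
  rewrite mul1r mul0r addr0 /Phi hjS mS_del // hj subn1.
  have : (0 < mS S)%N by apply/card_gt0P; exists j; rewrite inE jS hj.
  case: (mS S) => [//|k] _ /=.
  by case: (h \in S); apply: eqle; [rewrite AsS | ]; ring.
rewrite mul0r mul1r add0r /Phi hjS' mS_add // hj addn1.
case: (boolP (h \in S)) => hS.
  rewrite AsS addrAC subrr add0r; apply: ler_wpM2r; first exact: as_ge0.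
  exact: rj_nb.
apply: mulr_ge0; first exact: (rj_ge0 e beta0 Lh_ge0).
by rewrite subr_ge0 Bs_mono.
Qed.


Lemma sum_bool (P : pred 'I_n) (Y : R) : \sum_j (P j)%:R * Y = #|P|%:R * Y.
Proof.
rewrite -mulr_suml; congr (_ * _).
rewrite -sum1_card natr_sum [RHS]big_mkcond /=.
by apply: eq_bigr => j _; rewrite unfold_in; case: (P j).
Qed.

Local Notation d := (deg e h).

Lemma sum_Ej S : \sum_j Ej S j =
  (if h \in S then - Gs R K (mS S) else (beta * (mS S)%:R + 2) * Gs R K (mS S))
  + (mS S)%:R * (if h \in S then - as_ R K (mS S).-1
                               else - (Bs R K (mS S) - Bs R K (mS S).-1))
  + (d%:R - (mS S)%:R) * (if h \in S then beta * as_ R K (mS S) else 0).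
Proof.
rewrite /Ej !big_split /= !sum_bool.
have c1 : #|(fun j => j == h) : pred 'I_n| = 1%N.
  by rewrite -(card1 h); apply: eq_card => u; rewrite !inE.
have c2 : #|(fun j => e h j && (j \in S)) : pred 'I_n| = mS S.
  by rewrite /mS; apply: eq_card => u; rewrite !inE andbC.
have c3 : #|(fun j => e h j && (j \notin S)) : pred 'I_n|%:R = d%:R - (mS S)%:R :> R.
  have := sum_bool [pred j | e h j] 1.
  have -> : \sum_j ([pred j | e h j] j)%:R * (1 : R) =
     \sum_j ((e h j && (j \in S))%:R * 1 + (e h j && (j \notin S))%:R * 1).
    by apply: eq_bigr => j _ /=; case: (e h j); case: (j \in S); rewrite ?mulr1 ?addr0 ?add0r.
  rewrite big_split /= !sum_bool c2 !mulr1.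
  have -> : #|[pred j | e h j]| = d by rewrite /deg; apply: eq_card => u; rewrite !inE.
  by move=> <-; rewrite addrAC subrr add0r.
by rewrite c1 c2 c3 mul1r.
Qed.


Lemma drift_Phi S : S != finset.set0 ->
  \sum_j Ej S j <= \sum_T rate e beta Lh S T * (Phi T - Phi S).
Proof.
move=> S0.
have := sum_rate e beta Lh S (fun T => Phi T - Phi S); rewrite /= => ->.
apply: le_trans (ler_sum _ (fun j _ => D_ge_E j S0)) _.
apply: eqle; rewrite (bigID (fun j => j \in S)) /= addrC; congr (_ + _).
  by apply: eq_bigr => j jS; rewrite /Dj (negbTE jS).
by apply: eq_bigr => j jS; rewrite /Dj jS.
Qed.

Lemma drift_nz S : S != finset.set0 ->
  - (#|S| == 1)%N%:R <= \sum_T rate e beta Lh S T * (nz R T - nz R S).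
Proof.
move=> S0.
have := sum_rate e beta Lh S (fun T => nz R T - nz R S); rewrite /= => ->.
rewrite big1 ?add0r; last first.
  move=> j _; rewrite /nz S0.
  have -> : j |: S != finset.set0 by apply/set0Pn; exists j; rewrite setU11.
  by rewrite subrr mulr0.
case: (boolP (#|S| == 1)%N) => [/cards1P [v ->]|NS].
  have N1 : [set v] != finset.set0 by apply/set0Pn; exists v; rewrite set11.
  rewrite big_set1 /nz finset.setDv eqxx N1. by rewrite /= sub0r.
rewrite big1 ?oppr0 // => j jS; rewrite /nz S0.
have -> : S :\ j != finset.set0.
  by apply/eqP => E; move: NS; rewrite (cardsD1 j S) jS E cards0.
by rewrite subrr.
Qed.

Lemma mS_card S : (mS S + (h \in S) <= #|S|)%N.
Proof.
rewrite (cardsD1 h S) addnC leq_add2l; apply: subset_leq_card.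
apply/fintype.subsetP => u; rewrite !inE => /andP[uS hu]; rewrite uS andbT.
by apply/eqP => uh; move: hu; rewrite uh eirr.
Qed.


Lemma aux10 (u v M P N : R) : -1 + u <= M -> M <= P -> - v <= N -> v <= u ->
  -1 <= P + N.
Proof. move=> *; lra. Qed.

Hypothesis hKd : (2 * K <= d)%N.
Hypothesis hbd : 2 * ((K.+1)%:R ^+ 2) <= beta * d%:R.

Lemma drift_gg S : S != finset.set0 ->
  -1 <= \sum_T rate e beta Lh S T * (gg T - gg S).
Proof.
move=> S0.
have e1 : \sum_T rate e beta Lh S T * (gg T - gg S) =
  \sum_T rate e beta Lh S T * (Phi T - Phi S) +
  Kr R K / 4 * \sum_T rate e beta Lh S T * (nz R T - nz R S).
  rewrite mulr_sumr -big_split /=; apply: eq_bigr => T _; rewrite /gg; ring.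
rewrite e1.
have hn := drift_nz S0; have hp := drift_Phi S0; rewrite sum_Ej in hp.
have c0 : 0 <= Kr R K / 4 by rewrite divr_ge0 // ler0n.
have hn' := ler_wpM2l c0 hn; rewrite mulrN in hn'.
have hc := mS_card S.
case: (boolP (h \in S)) => hS in hp hc *; rewrite /= in hp.
  have hm := mainT beta0 hKd hbd (mS S).
  have hb : ((#|S| == 1) <= (mS S == 0))%N.
    case: eqP => // S1; rewrite S1 addn1 ltnS leqn0 in hc; by rewrite hc.
  have hb' : Kr R K / 4 * (#|S| == 1%N)%:R <= Kr R K / 4 * (mS S == 0)%:R.
    by apply: ler_wpM2l => //; rewrite ler_nat.
  rewrite mulrN in hp; exact: (aux10 hm hp hn' hb').
have hm := @mainF R K beta beta0 (mS S).
have hb : ((#|S| == 1) <= (mS S <= 1))%N.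
  by case: eqP => // S1; move: hc; rewrite S1 addn0 => ->.
have hb' : Kr R K / 4 * (#|S| == 1%N)%:R <= Kr R K / 4 * (mS S <= 1)%N%:R.
  by apply: ler_wpM2l => //; rewrite ler_nat.
rewrite mulrN mulr0 addr0 in hp; exact: (aux10 hm hp hn' hb').
Qed.

Lemma gg0 : gg finset.set0 = 0.
Proof.
rewrite /gg /Phi inE /nz eqxx /= mulr0 addr0.
have -> : mS finset.set0 = 0%N.
  rewrite /mS; apply/eqP; rewrite cards_eq0; apply/eqP/setP => u; rewrite !inE.
  by [].
exact: Bs0.
Qed.


Lemma le_sum_abs (f : {set 'I_n} -> R) S : f S <= \sum_T `|f T|.
Proof.
apply: le_trans (ler_norm _) _; rewrite (bigD1 S) //= lerDl.
by apply: sumr_ge0 => T _.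
Qed.

Lemma ET_star A : A != finset.set0 -> ((Kr R K / 8)%:E <= ET e beta Lh A)%E.
Proof.
move=> A0.
have hE := @ET_ge R n e beta Lh beta0 Lh_ge0 Lh_set0 A gg gg0 drift_gg
  (\sum_S `|gg S|) (le_sum_abs gg).
apply: le_trans hE; rewrite lee_fin.
have : Kr R K / 4 <= gg A.
  rewrite /gg /nz A0 mulr1 lerDr /Phi; case: ifP => _.
    exact: le_trans (_ : 0 <= Kr R K) (As_ge _ _ _); rewrite /Kr ler0n.
  exact: Bs_ge0.
move=> H; have c0 : 0 <= Kr R K by rewrite /Kr ler0n.
move: (gg A) H c0 => a; move: (Kr R K) => k *; lra.
Qed.

End Star.

Unset Implicit Arguments. Set Strict Implicit.

Lemma hub_spec (n : nat) (e : rel 'I_n) : (0 < n)%N ->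
  exists h, [pick v : 'I_n | deg e v == dmax e] = Some h /\ deg e h = dmax e.
Proof.
move=> n0.
have [i0 Hi0] := @bigop.eq_bigmax 'I_n (deg e) (ltac:(by rewrite card_ord)).
case: pickP => [h /eqP Hh|H]; first by exists h.
by move: (H i0); rewrite /dmax Hi0 eqxx.
Qed.

Lemma asym (R : realType) (alpha eps c1 c2 : R) :
  0 < alpha -> 0 < eps -> 0 < c1 -> 0 < c2 ->
  let kap := alpha * Num.min 1 eps in
  let c' := Num.min c1 (c1 * c2) in
  forall (x d b : R), 1 <= x -> c1 * (x `^ alpha) <= d ->
    c2 * (x `^ (- (alpha * (1 - eps)))) <= b ->
    c' * x `^ kap <= d /\ c' * x `^ kap <= b * d.
Proof.
move=> a0 e0 c10 c20 kap c' x d b x1 hd hb.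
have x0 : 0 < x by lra.
have kapa : kap <= alpha.
  rewrite /kap -[X in _ <= X]mulr1; apply: ler_wpM2l; first exact: ltW.
  by rewrite ge_min lexx.
have kape : kap <= alpha * eps.
  rewrite /kap; apply: ler_wpM2l; first exact: ltW.
  by rewrite ge_min lexx orbT.
have c'1 : c' <= c1 by rewrite /c' ge_min lexx.
have c'2 : c' <= c1 * c2 by rewrite /c' ge_min lexx orbT.
have c'0 : 0 <= c' by rewrite /c' le_min !ltW ?mulr_gt0.
have pk := powR_ge0 x kap.
split.
  apply: le_trans hd; apply: ler_pM => //.
  exact: ler_powR.
have E : c2 * x `^ (- (alpha * (1 - eps))) * (c1 * x `^ alpha) =
         c1 * c2 * x `^ (alpha * eps).
  rewrite mulrACA [c2 * c1]mulrC -powRD; last by apply/implyP => _; rewrite gt_eqF.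
  by congr (_ * _ `^ _); ring.
apply: le_trans (_ : c1 * c2 * x `^ (alpha * eps) <= _).
  by apply: ler_pM => //; exact: ler_powR.
rewrite -E; apply: ler_pM => //.
- by rewrite mulr_ge0 ?powR_ge0 ?ltW.
- by rewrite mulr_ge0 ?powR_ge0 ?ltW.
Qed.

Lemma grow (R : realType) (C0 lam : R) : 0 < C0 -> 0 < lam -> forall n : nat,
  (Num.truncn ((2 / C0) `^ (lam^-1)) < n)%N -> 2 <= C0 * n%:R `^ lam.
Proof.
move=> C00 l0 n hn.
set w := (2 / C0) `^ (lam^-1).
have w0 : 0 <= w by apply: powR_ge0.
have wn : w <= n%:R.
  apply: ltW; apply: lt_le_trans (Num.Theory.truncnS_gt w) _; rewrite ler_nat; exact: hn.
have : w `^ lam <= n%:R `^ lam by apply: ge0_ler_powR => //; [exact: ltW | rewrite nnegrE ler0n].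
rewrite /w -powRrM mulVf ?gt_eqF // powRr1; last by rewrite divr_ge0 // ltW.
move=> H; rewrite -ler_pdivrMl //; by rewrite mulrC.
Qed.
Lemma auxK (R : realFieldType) (c' m C0 xl k d bd : R) : 0 < m -> m <= c' -> m <= 1 ->
  C0 = m / 3 -> 1 <= xl -> 2 <= C0 * xl -> k <= C0 * xl -> C0 * xl < k + 1 ->
  0 <= k -> c' * (xl * xl) <= d -> c' * (xl * xl) <= bd ->
  [/\ 2 * k <= d, 2 * (k + 1) ^+ 2 <= bd & C0 / 16 * xl <= k / 8].
Proof.
move=> m0 mc m1 C0E xl1 g2 k1 k2 k0 hd hbd.
have C00 : 0 < C0 by rewrite C0E divr_gt0.
have xl0 : 0 <= xl by lra.
have a1 : c' * xl <= c' * (xl * xl).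
  by apply: ler_wpM2l; [lra | rewrite -[X in X <= _]mulr1 ler_wpM2l].
have a2 : 2 * C0 <= c' by rewrite C0E; lra.
have a3 : 2 * C0 * xl <= c' * xl by apply: ler_wpM2r.
split.
- lra.
- have b1 : k + 1 <= 2 * (C0 * xl) by lra.
  have b2 : (k + 1) ^+ 2 <= (2 * (C0 * xl)) ^+ 2.
    by rewrite ler_pXn2r // ?nnegrE; lra.
  have b3 : 8 * (C0 * C0) <= c'.
    rewrite C0E.
    have : m * m <= m by rewrite -[X in _ <= X]mulr1 ler_wpM2l //; lra.
    lra.
  have b4 : 8 * (C0 * C0) * (xl * xl) <= c' * (xl * xl).
    by apply: ler_wpM2r => //; rewrite mulr_ge0.
  have e1 : 2 * (2 * (C0 * xl)) ^+ 2 = 8 * (C0 * C0) * (xl * xl) by ring.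
  lra.
- have : C0 * xl / 16 <= k / 8 by lra.
  by rewrite mulrAC.
Qed.

Theorem theorem3 (R : realType) (e : forall n : nat, rel 'I_n) (beta : nat -> R)
    (A : forall n : nat, {set 'I_n}) :
  (forall n, simple_graph (e n)) ->
  (forall n, 0 <= beta n) ->
  (forall n, (0 < n)%N -> A n != @finset.set0 _) ->
  (exists alpha : R, 0 < alpha /\
     (exists c : R, 0 < c /\ exists N : nat, forall n : nat, (N <= n)%N ->
        c * (n%:R `^ alpha) <= (dmax (e n))%:R) /\
     (exists eps : R, 0 < eps /\ exists c : R, 0 < c /\ exists N : nat,
        forall n : nat, (N <= n)%N ->
        c * (n%:R `^ (- (alpha * (1 - eps)))) <= beta n)) ->
  exists M : R, exists L : forall n : nat, {set 'I_n} -> 'I_n -> R,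
    (forall n, is_policy M (L n)) /\
    exists lam : R, 0 < lam /\ exists C : R, 0 < C /\ exists N : nat,
      forall n : nat, (N <= n)%N ->
        ((C * (n%:R `^ lam))%:E <= ET (e n) (beta n) (L n) (A n))%E.
Proof.
move=> hs hb0 hA [alpha [a0 [[c1 [c10 [N1 hd]]] [eps [e0 [c2 [c20 [N2 hb]]]]]]]].
pose hub n := [pick v : 'I_n | deg (e n) v == dmax (e n)].
pose L n : {set 'I_n} -> 'I_n -> R :=
  if hub n is Some h then Lh R h else (fun _ _ => 0).
exists 2, L; split.
  move=> n; rewrite /L; case: (hub n) => [h|]; first exact: Lh_policy.
  split => //; split => // S; rewrite big1 //.
set kap := alpha * Num.min 1 eps.
set c' := Num.min c1 (c1 * c2).
have kap0 : 0 < kap by rewrite /kap mulr_gt0 // lt_min ltr01.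
have c'0 : 0 < c' by rewrite /c' lt_min c10 mulr_gt0.
set m := Num.min c' 1.
have m0 : 0 < m by rewrite /m lt_min c'0 ltr01.
set C0 := m / 3.
have C00 : 0 < C0 by rewrite divr_gt0.
set lam := kap / 2.
have lam0 : 0 < lam by rewrite divr_gt0.
exists lam; split => //.
exists (C0 / 16); split; first by rewrite divr_gt0.
exists (maxn (maxn N1 N2) (Num.truncn ((2 / C0) `^ (lam^-1))).+1).
move=> n; rewrite !geq_max => /andP[/andP[hn1 hn2] hn3].
have n0 : (0 < n)%N by apply: leq_trans hn3.
have x1 : 1 <= n%:R :> R by rewrite ler1n.
have [F1 F2] := @asym R alpha eps c1 c2 a0 e0 c10 c20 _ _ _ x1 (hd n hn1) (hb n hn2).
have g2 := @grow R C0 lam C00 lam0 n hn3.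
have [h [Hh Hd]] := @hub_spec n (e n) n0.
rewrite /L /hub Hh.
set xl := n%:R `^ lam.
have xk : n%:R `^ kap = xl * xl.
  rewrite /xl -powRD; last by apply/implyP => _; rewrite gt_eqF // (lt_le_trans ltr01 x1).
  by congr (_ `^ _); rewrite /lam; field.
have xl1 : 1 <= xl.
  by have := ler_powR x1 (ltW lam0); rewrite powRr0.
set K := Num.truncn (C0 * xl).
have K1 : K%:R <= C0 * xl.
  rewrite Num.Theory.truncn_le; apply: mulr_ge0; [exact: ltW | exact: le_trans ler01 xl1].
have K2 : C0 * xl < K%:R + 1.
  by have := Num.Theory.truncnS_gt (C0 * xl); rewrite -addn1 natrD.
rewrite xk in F1 F2.
have [hKd hbd hfin] := @auxK R c' m C0 xl K%:R _ _ m0 (ltac:(by rewrite /m ge_min lexx)) (ltac:(by rewrite /m ge_min lexx orbT)) erefl xl1 g2 K1 K2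
  (ler0n _ K) F1 F2.
have [hsym hirr] := hs n.
have hKd' : (2 * K <= deg (e n) h)%N by rewrite -(ler_nat R) natrM Hd.
have hbd' : 2 * (K.+1)%:R ^+ 2 <= beta n * (deg (e n) h)%:R.
  have -> : (K.+1)%:R = K%:R + 1 :> R by rewrite -addn1 natrD.
  by rewrite Hd.
apply: le_trans (ET_star hsym hirr (hb0 n) hKd' hbd' (hA n n0)).
by rewrite lee_fin /Kr.
Qed.
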